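(* Let $w_1,w_2\ge2$ be even. The $\mathbb Q$-linear map $(W_{w_1}^{\mathbb Q}\otimes1)\times V_{w_1,w_2}^{\mathbb Q}[I_D]\times(X_1^{w_1}\otimes W_{w_2}^{\mathbb Q})\to E_{w_1,w_2}^{\mathbb Q}$, $(P_H,P_D,P_V)\mapsto P_H-P_D+P_V$, is surjective and its kernel is the line spanned by $\big(1-X_1^{w_1},\,1-X_1^{w_1}X_2^{w_2},\,X_1^{w_1}(1-X_2^{w_2})\big)$. Consequently $\dim E_{w_1,w_2}^{\mathbb Q}=\dim W_{w_1}^{\mathbb Q}+\dim V_{w_1,w_2}^{\mathbb Q}[I_D]+\dim W_{w_2}^{\mathbb Q}-1$.
   Context: $\Gamma=PSL_2(\mathbb Z)$, $S=\pm\begin{pmatrix}0&-1\\1&0\end{pmatrix}$, $U=\pm\begin{pmatrix}0&1\\-1&1\end{pmatrix}$. For even $w$, $V_w^{\mathbb Q}$ is the space of rational polynomials of degree $\le w$ with action $\gamma.P(X)=(-cX+a)^wP\big(\frac{dX-b}{-cX+a}\big)$ for $\gamma=\pm\begin{pmatrix}a&b\\c&d\end{pmatrix}$; $W_w^{\mathbb Q}=\{P\in V_w^{\mathbb Q}:(1+S).P=(1+U+U^2).P=0\}$. $V_{w_1,w_2}^{\mathbb Q}$ is the space of rational polynomials in $X_1,X_2$ with $\deg_{X_j}\le w_j$ with diagonal action $(\gamma_1,\gamma_2).P(X_1,X_2)=(-c_1X_1+a_1)^{w_1}(-c_2X_2+a_2)^{w_2}P\big(\frac{d_1X_1-b_1}{-c_1X_1+a_1},\frac{d_2X_2-b_2}{-c_2X_2+a_2}\big)$.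 $V_{w_1,w_2}^{\mathbb Q}[I_D]=\{P:[(1,1)+(S,S)].P=[(1,1)+(U,U)+(U^2,U^2)].P=0\}$; $W_{w_1}^{\mathbb Q}\otimes1=\{P(X_1):P\in W_{w_1}^{\mathbb Q}\}$; $X_1^{w_1}\otimes W_{w_2}^{\mathbb Q}=\{X_1^{w_1}Q(X_2):Q\in W_{w_2}^{\mathbb Q}\}$; $E_{w_1,w_2}^{\mathbb Q}=(W_{w_1}^{\mathbb Q}\otimes1)+V_{w_1,w_2}^{\mathbb Q}[I_D]+(X_1^{w_1}\otimes W_{w_2}^{\mathbb Q})$. *)

(* Defs.v *)
From HB Require Import structures.
From mathcomp Require Import all_boot all_order all_algebra.
Unset Printing Implicit Defensive.
Import GRing.Theory.
Local Open Scope ring_scope.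

Definition mx2 (a b c d : rat) : 'M[rat]_2 :=
  \matrix_(i < 2, j < 2)
    (if (i : nat) == 0%N then (if (j : nat) == 0%N then a else b)
     else (if (j : nat) == 0%N then c else d)).

Definition matS : 'M[rat]_2 := mx2 0 (-1) 1 0.
Definition matU : 'M[rat]_2 := mx2 0 1 (-1) 1.

(* V_w^Q = polynomials of degree <= w, represented by the row vector
   (p_0, ..., p_w) of coefficients of X^0, ..., X^w.
   act_mx w g is the matrix of P |-> g.P  (P(X) = sum_i p_i X^i is sent to
   sum_i p_i (dX - b)^i (-cX + a)^(w-i)), acting on the right of rows. *)
Definition act_mx (w : nat) (g : 'M[rat]_2) : 'M[rat]_(w.+1) :=
  \matrix_(i < w.+1, k < w.+1)
    ((((g ord_max ord_max)%:P * 'X - (g ord0 ord_max)%:P) ^+ i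
      * ((g ord0 ord0)%:P - (g ord_max ord0)%:P * 'X) ^+ (w - i))`_k).

Definition actV (w : nat) (g : 'M[rat]_2) (v : 'rV[rat]_(w.+1)) : 'rV[rat]_(w.+1) :=
  v *m act_mx w g.

Definition Wsp (w : nat) : {vspace 'rV[rat]_(w.+1)} :=
  (lker (linfun (fun v : 'rV[rat]_(w.+1) => (v + actV w matS v)%R))
   :&: lker (linfun (fun v : 'rV[rat]_(w.+1) =>
                      (v + actV w matU v + actV w (matU *m matU) v)%R)))%VS.

(* V_{w1,w2}^Q: polynomials in X1, X2 with deg_{X1} <= w1, deg_{X2} <= w2,
   represented by the matrix whose (i,j) entry is the coefficient of
   X1^i X2^j. Diagonal action of (g1, g2). *)
Definition act2 (w1 w2 : nat) (g1 g2 : 'M[rat]_2)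
  (P : 'M[rat]_(w1.+1, w2.+1)) : 'M[rat]_(w1.+1, w2.+1) :=
  (act_mx w1 g1)^T *m P *m act_mx w2 g2.

Definition VID (w1 w2 : nat) : {vspace 'M[rat]_(w1.+1, w2.+1)} :=
  (lker (linfun (fun P : 'M[rat]_(w1.+1, w2.+1) => (P + act2 w1 w2 matS matS P)%R))
   :&: lker (linfun (fun P : 'M[rat]_(w1.+1, w2.+1) =>
          (P + act2 w1 w2 matU matU P + act2 w1 w2 (matU *m matU) (matU *m matU) P)%R)))%VS.

(* P(X) |-> P(X1) *)
Definition embH (w1 w2 : nat) (v : 'rV[rat]_(w1.+1)) : 'M[rat]_(w1.+1, w2.+1) :=
  \matrix_(i < w1.+1, j < w2.+1) (if (j : nat) == 0%N then v ord0 i else 0).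

(* Q(X) |-> X1^w1 Q(X2) *)
Definition embV (w1 w2 : nat) (v : 'rV[rat]_(w2.+1)) : 'M[rat]_(w1.+1, w2.+1) :=
  \matrix_(i < w1.+1, j < w2.+1) (if (i : nat) == w1 then v ord0 j else 0).

Definition WH (w1 w2 : nat) : {vspace 'M[rat]_(w1.+1, w2.+1)} :=
  (linfun (embH w1 w2) @: Wsp w1)%VS.

Definition WV (w1 w2 : nat) : {vspace 'M[rat]_(w1.+1, w2.+1)} :=
  (linfun (embV w1 w2) @: Wsp w2)%VS.

Definition Esp (w1 w2 : nat) : {vspace 'M[rat]_(w1.+1, w2.+1)} :=
  (WH w1 w2 + VID w1 w2 + WV w1 w2)%VS.

Definition mono (w1 w2 : nat) (i : 'I_(w1.+1)) (j : 'I_(w2.+1))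
  : 'M[rat]_(w1.+1, w2.+1) := delta_mx i j.

Definition kerH (w1 w2 : nat) : 'M[rat]_(w1.+1, w2.+1) :=
  mono w1 w2 ord0 ord0 - mono w1 w2 ord_max ord0.
Definition kerD (w1 w2 : nat) : 'M[rat]_(w1.+1, w2.+1) :=
  mono w1 w2 ord0 ord0 - mono w1 w2 ord_max ord_max.
Definition kerV (w1 w2 : nat) : 'M[rat]_(w1.+1, w2.+1) :=
  mono w1 w2 ord_max ord0 - mono w1 w2 ord_max ord_max.

(* Main.v *)
Require Import Defs.
From HB Require Import structures.
From mathcomp Require Import all_boot all_order all_algebra.
From mathcomp Require Import lra zify.
Import GRing.Theory.
Local Open Scope ring_scope.

Lemma linfunE' (aT rT : vectType rat) (f : aT -> rT) (fL : linear f) v :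
  linfun f v = f v.
Proof.
pose g : {linear aT -> rT} := HB.pack f (GRing.isLinear.Build _ _ _ _ f fL).
exact: (lfunE g v).
Qed.

Lemma linD (aT rT : lmodType rat) (f g : aT -> rT) :
  linear f -> linear g -> linear (fun v => f v + g v).
Proof. by move=> fL gL k x y; rewrite fL gL scalerDr addrACA. Qed.

Lemma linid (aT : lmodType rat) : linear (fun v : aT => v).
Proof. by []. Qed.

Lemma actV_lin w g : linear (actV w g).
Proof. by move=> k x y; rewrite /actV mulmxDl -scalemxAl. Qed.

Lemma act2_lin w1 w2 g1 g2 : linear (act2 w1 w2 g1 g2).
Proof. by move=> k x y; rewrite /act2 mulmxDr mulmxDl -scalemxAr -scalemxAl. Qed.

Lemma memW w v : (v \in Wsp w) =
  (v + actV w matS v == 0) && (v + actV w matU v + actV w (matU *m matU) v == 0).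
Proof.
rewrite /Wsp memv_cap !memv_ker !linfunE' //.
  by apply: linD; [apply: linD|]; [apply: linid | apply: actV_lin..].
by apply: linD; [apply: linid | apply: actV_lin].
Qed.

Lemma memVID w1 w2 P : (P \in VID w1 w2) =
  (P + act2 w1 w2 matS matS P == 0) &&
  (P + act2 w1 w2 matU matU P + act2 w1 w2 (matU *m matU) (matU *m matU) P == 0).
Proof.
rewrite /VID memv_cap !memv_ker !linfunE' //.
  by apply: linD; [apply: linD|]; [apply: linid | apply: act2_lin..].
by apply: linD; [apply: linid | apply: act2_lin].
Qed.

Lemma embH_lin w1 w2 : linear (embH w1 w2).
Proof. by move=> k x y; apply/matrixP=> i j; rewrite !mxE; case: ifP; rewrite ?mulr0 ?addr0. Qed.

Lemma embV_lin w1 w2 : linear (embV w1 w2).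
Proof. by move=> k x y; apply/matrixP=> i j; rewrite !mxE; case: ifP; rewrite ?mulr0 ?addr0. Qed.

Lemma row0_act w g : row 0 (act_mx w g) =
  \row_k ((((g ord0 ord0)%:P - (g ord_max ord0)%:P * 'X) ^+ w)`_k).
Proof. by apply/rowP=> k; rewrite !mxE /= expr0 mul1r subn0. Qed.

Lemma rowmax_act w g : row ord_max (act_mx w g) =
  \row_k ((((g ord_max ord_max)%:P * 'X - (g ord0 ord_max)%:P) ^+ w)`_k).
Proof. by apply/rowP=> k; rewrite !mxE /= subnn expr0 mulr1. Qed.

Lemma matS_E : [/\ matS ord0 ord0 = 0, matS ord0 ord_max = -1,
   matS ord_max ord0 = 1 & matS ord_max ord_max = 0].
Proof. by rewrite /matS /mx2 !mxE. Qed.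

Lemma matU_E : [/\ matU ord0 ord0 = 0, matU ord0 ord_max = 1,
   matU ord_max ord0 = -1 & matU ord_max ord_max = 1].
Proof. by rewrite /matU /mx2 !mxE. Qed.

Lemma matU2_E : [/\ (matU *m matU) ord0 ord0 = -1, (matU *m matU) ord0 ord_max = 1,
   (matU *m matU) ord_max ord0 = -1 & (matU *m matU) ord_max ord_max = 0].
Proof. rewrite /matU /mx2 !mxE !big_ord_recr !big_ord0 /= !mxE /=; split; lra. Qed.

Lemma rowS0 w : ~~ odd w -> row ord0 (act_mx w matS) = delta_mx 0 ord_max.
Proof.
move=> ew; rewrite row0_act; case: matS_E => -> _ -> _.
rewrite polyC0 polyC1 mul1r sub0r exprNn -signr_odd (negbTE ew) expr0 mul1r.
by apply/rowP=> k; rewrite !mxE coefXn.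
Qed.

Lemma rowSw w : row ord_max (act_mx w matS) = delta_mx 0 ord0.
Proof.
rewrite rowmax_act; case: matS_E => _ -> _ ->.
rewrite polyC0 mul0r polyCN opprK add0r polyC1 expr1n.
by apply/rowP=> -[[|k] hk]; rewrite !mxE coefC.
Qed.

Lemma rowU0 w : row ord0 (act_mx w matU) = delta_mx 0 ord_max.
Proof.
rewrite row0_act; case: matU_E => -> _ -> _.
rewrite polyC0 polyCN polyC1 mulN1r sub0r opprK.
by apply/rowP=> k; rewrite !mxE coefXn.
Qed.

Lemma rowU2w w : ~~ odd w -> row ord_max (act_mx w (matU *m matU)) = delta_mx 0 ord0.
Proof.
move=> ew; rewrite rowmax_act; case: matU2_E => _ -> _ ->.
rewrite polyC0 mul0r polyC1 sub0r -signr_odd (negbTE ew) expr0.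
by apply/rowP=> -[[|k] hk]; rewrite !mxE coefC.
Qed.

Lemma rowUw w : row ord_max (act_mx w matU) = row ord0 (act_mx w (matU *m matU)).
Proof.
rewrite rowmax_act row0_act; case: matU_E => _ -> _ ->; case: matU2_E => -> _ -> _.
by rewrite polyCN polyC1 mul1r mulN1r opprK addrC.
Qed.

Lemma actV_delta w g i : actV w g (delta_mx 0 i) = row i (act_mx w g).
Proof. by rewrite /actV -rowE. Qed.

Lemma act2_delta w1 w2 g1 g2 i j : act2 w1 w2 g1 g2 (delta_mx i j) =
  (row i (act_mx w1 g1))^T *m row j (act_mx w2 g2).
Proof.
by rewrite /act2 !rowE trmx_mul trmx_delta -!mulmxA (mulmxA (delta_mx i 0)) mul_delta_mx.
Qed.

Lemma zcancel2 (V : zmodType) (a b : V) : (a - b) + (b - a) = 0.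
Proof. by rewrite addrA subrK subrr. Qed.

Lemma zcancel3 (V : zmodType) (a b c : V) : (a - b) + (b - c) + (c - a) = 0.
Proof. by rewrite (addrA (a - b)) subrK addrA subrK subrr. Qed.

Definition eH w : 'rV[rat]_(w.+1) := delta_mx 0 ord0 - delta_mx 0 ord_max.

Lemma eH_W w : ~~ odd w -> eH w \in Wsp w.
Proof.
move=> ew; rewrite memW /eH /actV !mulmxBl -!rowE rowS0 // rowSw rowU0 rowU2w //.
by rewrite rowUw zcancel2 zcancel3 !eqxx.
Qed.

Lemma mono_delta w1 w2 i j : mono w1 w2 i j = delta_mx i j.
Proof. by []. Qed.

Lemma act2B w1 w2 g1 g2 P Q : act2 w1 w2 g1 g2 (P - Q) = act2 w1 w2 g1 g2 P - act2 w1 w2 g1 g2 Q.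
Proof. by rewrite /act2 mulmxBr mulmxBl. Qed.

Lemma kerD_VID w1 w2 : ~~ odd w1 -> ~~ odd w2 -> kerD w1 w2 \in VID w1 w2.
Proof.
move=> e1 e2; rewrite memVID /kerD !mono_delta !act2B !act2_delta.
rewrite !rowS0 // !rowSw !rowU0 !rowU2w // !rowUw !trmx_delta !mul_delta_mx.
by rewrite zcancel2 zcancel3 !eqxx.
Qed.

Lemma kerH_embH w1 w2 : kerH w1 w2 = embH w1 w2 (eH w1).
Proof.
apply/matrixP=> i j; rewrite /kerH !mono_delta /eH !mxE.
by case: j => [[|j] hj]; case: i => [[|i] hi]; rewrite -!val_eqE /=; case: (_ == w1); case: (_ == w2); rewrite /= ?mulr0n ?mulr1n ?subrr ?subr0 ?sub0r.
Qed.

Lemma kerV_embV w1 w2 : kerV w1 w2 = embV w1 w2 (eH w2).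
Proof.
apply/matrixP=> i j; rewrite /kerV !mono_delta /eH !mxE.
by case: j => [[|j] hj]; case: i => [[|i] hi]; rewrite -!val_eqE /=; case: (_ == w1); case: (_ == w2); rewrite /= ?mulr0n ?mulr1n ?subrr ?subr0 ?sub0r.
Qed.

Lemma actS_entry w (i k : 'I_w.+1) :
  act_mx w matS i k = if (i + k == w)%N then (-1) ^+ k else 0.
Proof.
rewrite mxE; case: matS_E => -> -> -> ->.
set r := (if _ then _ else _).
rewrite polyC0 !mul0r polyCN opprK add0r polyC1 expr1n mul1r sub0r mul1r exprNn.
rewrite (_ : (-1 : {poly rat}) ^+ (w - i)%N = ((-1) ^+ (w - i)%N)%:P); last first.
  by rewrite polyC_exp polyCN polyC1.
rewrite coefCM coefXn.
have -> : (k == (w - i)%N :> nat) = (i + k == w)%N.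
  by apply/idP/idP => /eqP h; apply/eqP; have := ltn_ord i; lia.
rewrite /r; case: eqP => h; last by rewrite mulr0.
by rewrite mulr1 (_ : (w - i = k)%N) //; lia.
Qed.

Lemma sum_rev w (F : 'I_w.+1 -> rat) (k : 'I_w.+1) (c : rat) :
  \sum_(i < w.+1) (if (i + k == w)%N then c else 0) * F i = c * F (rev_ord k).
Proof.
rewrite (bigD1 (rev_ord k)) //= big1 ?addr0.
  rewrite ifT //; apply/eqP; have := ltn_ord k; rewrite /=; lia.
move=> i hi; rewrite ifF ?mul0r //; apply/negP => /eqP h.
move/negP: hi; apply; apply/eqP/val_inj => /=; have := ltn_ord k; lia.
Qed.

Lemma actSS_entry w1 w2 P (k : 'I_w1.+1) (l : 'I_w2.+1) :
  act2 w1 w2 matS matS P k l = (-1) ^+ k * (-1) ^+ l * P (rev_ord k) (rev_ord l).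
Proof.
rewrite /act2 mxE.
under eq_bigr => j _ do rewrite actS_entry mulrC.
rewrite sum_rev mxE.
under eq_bigr => i _ do rewrite mxE actS_entry.
by rewrite sum_rev mulrCA mulrA.
Qed.

Lemma actVS_entry w v (k : 'I_w.+1) :
  actV w matS v 0 k = (-1) ^+ k * v 0 (rev_ord k).
Proof.
rewrite /actV mxE.
under eq_bigr => j _ do rewrite actS_entry mulrC.
by rewrite sum_rev.
Qed.

Lemma Sent_mx w1 w2 P : P \in VID w1 w2 -> forall k l,
  P k l + (-1) ^+ k * (-1) ^+ l * P (rev_ord k) (rev_ord l) = 0.
Proof.
rewrite memVID => /andP [/eqP h _] k l.
by have := congr1 (fun M : 'M[rat]_(w1.+1, w2.+1) => M k l) h; rewrite mxE actSS_entry mxE.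
Qed.

Lemma Sent_v w v : v \in Wsp w -> forall k,
  v ord0 k + (-1) ^+ k * v ord0 (rev_ord k) = 0.
Proof.
rewrite memW => /andP [/eqP h _] k.
by have := congr1 (fun M : 'rV[rat]_(w.+1) => M ord0 k) h; rewrite mxE actVS_entry mxE.
Qed.

Lemma kernel_main w1 w2 (hw1 : (2 <= w1)%N) (hw2 : (2 <= w2)%N)
    (ew1 : ~~ odd w1) (ew2 : ~~ odd w2) a b :
  a \in Wsp w1 -> b \in Wsp w2 -> embH w1 w2 a + embV w1 w2 b \in VID w1 w2 ->
  embH w1 w2 a = a 0 0 *: kerH w1 w2 /\ embV w1 w2 b = a 0 0 *: kerV w1 w2.
Proof.
move=> /Sent_v ha /Sent_v hb /Sent_mx hD.
set t := a ord0 ord0.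
have aw : a ord0 ord_max = - t.
  have := ha ord0; rewrite expr0 mul1r (_ : rev_ord ord0 = ord_max); last first.
    by apply: val_inj => /=; lia.
  by move/eqP; rewrite addrC addr_eq0 => /eqP.
have amid : forall k : 'I_w1.+1, (0 < k < w1)%N -> a ord0 k = 0.
  move=> k hk; have := hD k ord0; rewrite !mxE /=.
  do 3 (rewrite ifF; last by apply/negbTE/eqP; lia).
  by rewrite expr0 mulr1 !addr0 mulr0 addr0.
have bmid : forall l : 'I_w2.+1, (0 < l < w2)%N -> b ord0 l = 0.
  move=> l hl; have := hD ord_max l; rewrite !mxE /= eqxx.
  do 3 (rewrite ifF; last by apply/negbTE/eqP; lia).
  by rewrite !addr0 add0r mulr0 addr0.
have b0 : b ord0 ord0 = t.
  have := hD ord_max ord0; rewrite !mxE /= eqxx.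
  do 2 (rewrite ifF; last by apply/negbTE/eqP; lia).
  rewrite !addr0 mulr0 addr0 aw => /eqP; rewrite addrC subr_eq0 => /eqP //.
have bw : b ord0 ord_max = - t.
  have := hb ord0; rewrite expr0 mul1r (_ : rev_ord ord0 = ord_max); last first.
    by apply: val_inj => /=; lia.
  by move/eqP; rewrite b0 addrC addr_eq0 => /eqP.
have hA : forall i : 'I_w1.+1, a ord0 i = t * (((i : nat) == 0%N)%:R - ((i : nat) == w1)%:R).
  move=> i; have [i0|ipos] := posnP i.
    rewrite (_ : i = ord0); last by apply: val_inj.
    rewrite /= (_ : (0%N == w1) = false) ?mulr0n ?subr0 ?mulr1 //; apply/negbTE/eqP; lia.
  case: (ltngtP i w1) => h.
  - rewrite amid; last by apply/andP.
    by rewrite /= ?mulr0n ?subrr ?mulr0.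
  - by have := ltn_ord i; lia.
  - rewrite (_ : i = ord_max); last by apply: val_inj.
    by rewrite aw /= ?mulr0n ?mulr1n ?sub0r ?mulrN1.
have hB : forall i : 'I_w2.+1, b ord0 i = t * (((i : nat) == 0%N)%:R - ((i : nat) == w2)%:R).
  move=> i; have [i0|ipos] := posnP i.
    rewrite (_ : i = ord0); last by apply: val_inj.
    rewrite b0 /= (_ : (0%N == w2) = false) ?mulr0n ?subr0 ?mulr1 //; apply/negbTE/eqP; lia.
  case: (ltngtP i w2) => h.
  - rewrite bmid; last by apply/andP.
    by rewrite /= ?mulr0n ?subrr ?mulr0.
  - by have := ltn_ord i; lia.
  - rewrite (_ : i = ord_max); last by apply: val_inj.
    by rewrite bw /= ?mulr0n ?mulr1n ?sub0r ?mulrN1.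
split; apply/matrixP => i j.
  rewrite kerH_embH !mxE hA -!val_eqE /=.
  by case: ((j : nat) == 0%N); rewrite ?mulr0.
rewrite kerV_embV !mxE hB -!val_eqE /=.
by case: ((i : nat) == w1); rewrite ?mulr0.
Qed.

Lemma zc (V : zmodType) (x y : V) : x - (x + y) + y = 0.
Proof. by rewrite opprD addrA subrr sub0r addNr. Qed.

Lemma kerHVD w1 w2 : kerH w1 w2 + kerV w1 w2 = kerD w1 w2.
Proof. by rewrite /kerH /kerV /kerD addrA subrK. Qed.

Lemma kerV_neq0 w1 w2 : (0 < w2)%N -> kerV w1 w2 != 0.
Proof.
move=> hw; apply/negP => /eqP h; have := congr1 (fun M : 'M[rat]_(w1.+1, w2.+1) => M ord_max ord0) h.
rewrite /kerV !mono_delta !mxE !eqxx /= -!val_eqE /=.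
by case: w2 hw {h} => [|w2] //= _; rewrite subr0 => /eqP; rewrite oner_eq0.
Qed.

Lemma WH_mem w1 w2 PH : PH \in WH w1 w2 -> exists2 a, a \in Wsp w1 & PH = embH w1 w2 a.
Proof. by case/memv_imgP => a ha ->; exists a; rewrite // linfunE' //; apply: embH_lin. Qed.

Lemma WV_mem w1 w2 PV : PV \in WV w1 w2 -> exists2 a, a \in Wsp w2 & PV = embV w1 w2 a.
Proof. by case/memv_imgP => a ha ->; exists a; rewrite // linfunE' //; apply: embV_lin. Qed.

Lemma embH_WH w1 w2 a : a \in Wsp w1 -> embH w1 w2 a \in WH w1 w2.
Proof. by move=> ha; rewrite -linfunE'; [apply: memv_img | apply: embH_lin]. Qed.

Lemma embV_WV w1 w2 a : a \in Wsp w2 -> embV w1 w2 a \in WV w1 w2.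
Proof. by move=> ha; rewrite -linfunE'; [apply: memv_img | apply: embV_lin]. Qed.

Lemma kernel_iff w1 w2 (hw1 : (2 <= w1)%N) (hw2 : (2 <= w2)%N)
    (ew1 : ~~ odd w1) (ew2 : ~~ odd w2) PH PD PV :
  PH \in WH w1 w2 -> PD \in VID w1 w2 -> PV \in WV w1 w2 ->
        (PH - PD + PV = 0 <->
         exists t : rat, [/\ PH = t *: kerH w1 w2, PD = t *: kerD w1 w2
                           & PV = t *: kerV w1 w2]).
Proof.
move=> /WH_mem [a ha ->] hD /WV_mem [b hb ->]; split.
  move=> /eqP; rewrite addrAC subr_eq0 => /eqP hPD.
  move: (hD); rewrite -hPD => hD'.
  have [hA hB] := @kernel_main _ _ hw1 hw2 ew1 ew2 _ _ ha hb hD'.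
  exists (a ord0 ord0); split => //.
  by rewrite hA hB -scalerDr kerHVD.
case=> t [-> -> ->].
by rewrite -kerHVD -scalerBr -scalerDr zc scaler0.
Qed.

Lemma embH_inj w1 w2 : injective (embH w1 w2).
Proof.
move=> x y h; apply/rowP => i.
by have := congr1 (fun M : 'M[rat]_(w1.+1, w2.+1) => M i ord0) h; rewrite !mxE /= ?(ord1 0).
Qed.

Lemma embV_inj w1 w2 : injective (embV w1 w2).
Proof.
move=> x y h; apply/rowP => j.
by have := congr1 (fun M : 'M[rat]_(w1.+1, w2.+1) => M ord_max j) h; rewrite !mxE /= eqxx.
Qed.

Lemma dimWH w1 w2 : \dim (WH w1 w2) = \dim (Wsp w1).
Proof.
apply: limg_dim_eq.
have /eqP -> : lker (linfun (embH w1 w2)) == 0%VS.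
  apply/lker0P => x y; rewrite !linfunE'; [exact: embH_inj| apply: embH_lin..].
by rewrite capv0.
Qed.

Lemma dimWV w1 w2 : \dim (WV w1 w2) = \dim (Wsp w2).
Proof.
apply: limg_dim_eq.
have /eqP -> : lker (linfun (embV w1 w2)) == 0%VS.
  apply/lker0P => x y; rewrite !linfunE'; [exact: embV_inj| apply: embV_lin..].
by rewrite capv0.
Qed.

Theorem proposition19 (w1 w2 : nat) (hw1 : (2 <= w1)%N) (hw2 : (2 <= w2)%N)
    (ew1 : ~~ odd w1) (ew2 : ~~ odd w2) :
  [/\ (* surjectivity onto E *)
      forall P, P \in Esp w1 w2 ->
        exists PH PD PV, [/\ PH \in WH w1 w2, PD \in VID w1 w2, PV \in WV w1 w2
                           & P = PH - PD + PV],
      (* the generator of the kernel lies in the domain *)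
      [/\ kerH w1 w2 \in WH w1 w2, kerD w1 w2 \in VID w1 w2 & kerV w1 w2 \in WV w1 w2],
      (* the kernel is the line spanned by (kerH, kerD, kerV) *)
      (forall PH PD PV, PH \in WH w1 w2 -> PD \in VID w1 w2 -> PV \in WV w1 w2 ->
        (PH - PD + PV = 0 <->
         exists t : rat, [/\ PH = t *: kerH w1 w2, PD = t *: kerD w1 w2
                           & PV = t *: kerV w1 w2]))
    & (* dimension formula *)
      (\dim (Esp w1 w2) + 1 = \dim (Wsp w1) + \dim (VID w1 w2) + \dim (Wsp w2))%N].
Proof.
have kH : kerH w1 w2 \in WH w1 w2 by rewrite kerH_embH; apply/embH_WH/eH_W.
have kD : kerD w1 w2 \in VID w1 w2 by apply: kerD_VID.
have kV : kerV w1 w2 \in WV w1 w2 by rewrite kerV_embV; apply/embV_WV/eH_W.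
have kI := @kernel_iff _ _ hw1 hw2 ew1 ew2.
split => //.
  move=> P /memv_addP [u /memv_addP [h hh [d hd ->]] [v hv ->]].
  exists h, (- d), v; split => //; first by rewrite rpredN.
  by rewrite opprK.
have cap1 : (WH w1 w2 :&: VID w1 w2 = 0)%VS.
  apply/eqP; rewrite -subv0; apply/subvP => x /memv_capP [hx1 hx2].
  have [fwd _] := kI x x 0 hx1 hx2 (mem0v _).
  have [t [hx _ h0]] := fwd (ltac:(by rewrite subrr add0r)).
  move/esym/eqP: h0; rewrite scaler_eq0 (negbTE (@kerV_neq0 w1 w2 (ltnW hw2))) orbF => /eqP t0.
  by rewrite memv0 hx t0 scale0r.
have cap2 : ((WH w1 w2 + VID w1 w2) :&: WV w1 w2 = <[kerV w1 w2]>)%VS.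
  apply/eqP; rewrite eqEsubv; apply/andP; split.
    apply/subvP => x /memv_capP [/memv_addP [h hh [d hd ->]] hx].
    have hd' : - d \in VID w1 w2 by rewrite rpredN.
    have hx' : - (h + d) \in WV w1 w2 by rewrite rpredN.
    have [fwd _] := kI _ _ _ hh hd' hx'.
    have [t [_ _ hv]] := fwd (ltac:(by rewrite opprK subrr)).
    by apply/vlineP; exists (- t); rewrite scaleNr -hv opprK.
  rewrite -memvE memv_cap kV andbT.
  rewrite (_ : kerV w1 w2 = - kerH w1 w2 + kerD w1 w2); last first.
    by rewrite -kerHVD addrA addNr add0r.
  by apply: memv_add => //; rewrite rpredN.
have d1 := dimv_sum_cap (WH w1 w2 + VID w1 w2) (WV w1 w2).
have d2 := dimv_sum_cap (WH w1 w2) (VID w1 w2).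
rewrite cap2 dim_vline kerV_neq0 in d1; last exact: ltnW.
rewrite cap1 dimv0 addn0 in d2.
rewrite -(dimWH w1 w2) -(dimWV w1 w2) /Esp; lia.
Qed.
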